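(* Let $D$ be a domain in a metric measure space $(X,d,\mu)$ of finite Hausdorff dimension $\alpha\geqslant2$ and let $(X',d',\mu')$ be a metric measure space of finite Hausdorff dimension $\alpha'\geqslant2$. Let $Q:D\to[0,\infty]$ be measurable, let $f:D\to X'$ be an open discrete mapping which is a ring $Q$-mapping at $x_0\in D$, and let $0<\varepsilon_0<\operatorname{dist}(x_0,\partial D)$ be such that $\overline{B(x_0,\varepsilon_0)}$ is a compact subset of $D$. Assume that for some $\varepsilon_0'\in(0,\varepsilon_0)$, some function $F(\varepsilon,\varepsilon_0)$ and some family of nonnegative Lebesgue measurable functions $\psi_\varepsilon:(\varepsilon,\varepsilon_0)\to[0,\infty]$, $\varepsilon\in(0,\varepsilon_0')$, $\int_{\varepsilon<d(x,x_0)<\varepsilon_0}Q(x)\psi_\varepsilon^\alpha(d(x,x_0))\,d\mu(x)\leqslant F(\varepsilon,\varepsilon_0)$ and $0<I(\varepsilon,\varepsilon_0):=\int_\varepsilon^{\varepsilon_0}\psi_\varepsilon(t)\,dt<\infty$ for all $\varepsilon\in(0,\varepsilon_0')$. If $f$ satisfies condition $\mathbf{A}$, then $M_{\alpha'}\big(\Gamma(f(\overline{B(x_0,\varepsilon)}),\partial f(B(x_0,\varepsilon_0)),X')\big)\leqslant F(\varepsilon,\varepsilon_0)/I^\alpha(\varepsilon,\varepsilon_0)$ for all $\varepsilon\in(0,\varepsilon_0')$.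
   Context: $(X,d,\mu)$, $(X',d',\mu')$ are metric spaces with locally finite Borel measures. $B(x_0,r)=\{x:d(x,x_0)<r\}$, $S(x_0,r)=\{x:d(x,x_0)=r\}$, $A(x_0,r_1,r_2)=\{x:r_1<d(x,x_0)<r_2\}$. $\Gamma(E,F,H)$ is the family of continuous curves $\gamma:[0,1]\to X$ (resp. $X'$) with $\gamma(0)\in E$, $\gamma(1)\in F$, $\gamma(t)\in H$ for $t\in(0,1)$. A Borel $\rho\geqslant0$ is admissible for $\Gamma$ if $\int_\gamma\rho\,ds\geqslant1$ for each locally rectifiable $\gamma\in\Gamma$; $M_{\alpha'}(\Gamma)=\inf_\rho\int_{X'}\rho^{\alpha'}d\mu'$. $f:D\to X'$ is a ring $Q$-mapping at $x_0$ if for all $0<r_1<r_2<\infty$ and every Lebesgue measurable $\eta:(r_1,r_2)\to[0,\infty]$ with $\int_{r_1}^{r_2}\eta\,dr\geqslant1$: $M_{\alpha'}(f(\Gamma(S(x_0,r_1),S(x_0,r_2),A(x_0,r_1,r_2))))\leqslant\int_{A(x_0,r_1,r_2)\cap D}Q(x)\eta^\alpha(d(x,x_0))\,d\mu(x)$. A mapping is discrete if preimages of points are discrete sets, open if it maps open sets to open sets. For an open discrete $f:D\to X'$, a curve $\beta:[a,b)\to X'$ and $x\in f^{-1}(\beta(a))$, a curve $\alpha:[a,c)\to D$ is a maximal $f$-lifting of $\beta$ starting at $x$ if $\alpha(a)=x$, $f\circ\alpha=\beta|_{[a,c)}$, and for no $c<c'\leqslant b$ is there a curve $\alpha':[a,c')\to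 D$ with $\alpha=\alpha'|_{[a,c)}$ and $f\circ\alpha'=\beta|_{[a,c')}$. Condition $\mathbf{A}$: for every curve $\beta:[a,b)\to X'$ and every $x\in f^{-1}(\beta(a))$, $f$ has a maximal $f$-lifting of $\beta$ starting at $x$. *)

(* Defs.v *)
From HB Require Import structures.
From mathcomp Require Import all_boot all_order all_algebra.
From mathcomp Require Import all_classical all_reals all_analysis.
From mathcomp Require Import measurable_realfun.
Set Implicit Arguments.
Unset Strict Implicit.
Unset Printing Implicit Defensive.
Import Order.TTheory GRing.Theory Num.Theory.

Local Open Scope classical_set_scope.
Local Open Scope ring_scope.

(* The real line equipped with the (complete) Lebesgue sigma-algebra:
   measurable functions on it are the Lebesgue measurable functions. *)
Definition lebR (R : realType) :=
  caratheodory_type ((wlength (R:=R) idfun)^*)%mu.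

Section MetricDefs.
Context {R : realType} {T : Type} (d : T -> T -> R).

Definition is_metric : Prop :=
  [/\ (forall x y, 0 <= d x y),
      (forall x y, d x y = 0 <-> x = y),
      (forall x y, d x y = d y x) &
      (forall x y z, d x z <= d x y + d y z)].

Definition mball (x0 : T) (r : R) : set T := [set x | d x x0 < r].
Definition msphere (x0 : T) (r : R) : set T := [set x | d x x0 = r].
Definition mannulus (x0 : T) (r1 r2 : R) : set T :=
  [set x | r1 < d x x0 < r2].

Definition d_open (A : set T) : Prop :=
  forall x, A x -> exists2 r : R, 0 < r & mball x r `<=` A.
Definition d_closure (A : set T) : set T :=
  [set x | forall r : R, 0 < r -> exists2 y, A y & d x y < r].
Definition d_interior (A : set T) : set T :=
  [set x | exists2 r : R, 0 < r & mball x r `<=` A].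
Definition d_boundary (A : set T) : set T := d_closure A `\` d_interior A.

Definition d_connected (A : set T) : Prop :=
  forall U V : set T, d_open U -> d_open V -> A `<=` U `|` V ->
    A `&` U `&` V = set0 -> A `&` U = set0 \/ A `&` V = set0.

Definition d_domain (A : set T) : Prop :=
  [/\ A !=set0, d_open A & d_connected A].

Definition d_compact (A : set T) : Prop :=
  forall F : set (set T), (forall U, F U -> d_open U) ->
    A `<=` \bigcup_(U in F) U ->
    exists (n : nat) (g : nat -> set T),
      (forall i, (i < n)%N -> F (g i)) /\
      A `<=` \bigcup_(i in [set i : nat | (i < n)%N]) g i.

(* dist(x, E) = inf { d(x,y) : y in E }  (= +oo if E is empty) *)
Definition dist_to (x : T) (E : set T) : \bar R :=
  ereal_inf [set (d x y)%:E | y in E].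

Definition diam (U : set T) : \bar R :=
  ereal_sup [set (d p.1 p.2)%:E | p in U `*` U].

Definition hterm (s : R) (U : set T) : \bar R :=
  if pselect (U = set0) then 0%E else (diam U `^ s)%E.

Definition haus_delta (s delta : R) (A : set T) : \bar R :=
  ereal_inf [set (\sum_(0 <= i <oo) hterm s (U i))%E
            | U in [set U : nat -> set T |
                     A `<=` \bigcup_i U i /\
                     forall i, (diam (U i) <= delta%:E)%E]].

(* H^s = lim_{delta -> 0} H^s_delta = sup_{delta > 0} H^s_delta *)
Definition haus (s : R) (A : set T) : \bar R :=
  ereal_sup [set haus_delta s delta A | delta in [set delta : R | 0 < delta]].

Definition hdim : \bar R :=
  ereal_inf [set s%:E | s in [set s : R | 0 <= s /\ haus s setT = 0%E]].

Definition cont_on (g : R -> T) (I : set R) : Prop :=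
  forall t, I t -> forall e : R, 0 < e ->
    exists2 del : R, 0 < del &
      forall s, I s -> `|s - t| < del -> d (g s) (g t) < e.

Definition is_curve (g : R -> T) : Prop := cont_on g [set t | 0 <= t <= 1].

Definition curve_family (E F H : set T) : set (R -> T) :=
  [set g | [/\ is_curve g, E (g 0), F (g 1) &
              forall t, 0 < t < 1 -> H (g t)]].

Definition curve_length (g : R -> T) (a b : R) : \bar R :=
  ereal_sup [set x | exists (n : nat) (t : nat -> R),
     [/\ t 0%N = a, t n = b, (forall i, (i < n)%N -> t i <= t i.+1) &
         x = (\sum_(i < n) d (g (t i)) (g (t i.+1)))%:E]].

(* a closed curve [0,1] -> T is locally rectifiable iff it is rectifiable *)
Definition rectifiable (g : R -> T) : Prop :=
  (curve_length g 0 1 < +oo)%E.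

Definition normal_rep (g h : R -> T) : Prop :=
  forall t, 0 <= t <= 1 -> h (fine (curve_length g 0 t)) = g t.

End MetricDefs.

Section ModulusDefs.
Context {R : realType} {dsp : measure_display} {T : measurableType dsp}
  (d : T -> T -> R).

Definition borel_for : Prop :=
  forall A : set T, measurable A <-> <<s [set U | d_open d U] >> A.

Definition locally_finite (mu : {measure set T -> \bar R}) : Prop :=
  forall x, exists2 r : R, 0 < r & (mu (mball d x r) < +oo)%E.

(* int_g rho ds >= 1 for every locally rectifiable g in Gamma;
   int_g rho ds := int_0^{l(g)} rho(g0(s)) ds, g0 the normal representation *)
Definition admissible (Gam : set (R -> T)) (rho : T -> \bar R) : Prop :=
  [/\ (forall x, (0 <= rho x)%E), measurable_fun [set: T] rho &
      forall g, Gam g -> rectifiable d g -> forall h, normal_rep d g h ->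
        (1 <= \int[lebesgue_measure]_(s in [set s : R | (0 <= s <= fine (curve_length d g 0 1))%R])
                rho (h s))%E].

Definition modulus (mu : {measure set T -> \bar R}) (p : R)
    (Gam : set (R -> T)) : \bar R :=
  ereal_inf [set (\int[mu]_x (rho x `^ p))%E | rho in admissible Gam].

End ModulusDefs.

Section MappingDefs.
Context {R : realType} {T T' : Type} (d : T -> T -> R) (d' : T' -> T' -> R)
  (D : set T) (f : T -> T').

Definition cont_map_on : Prop :=
  forall x, D x -> forall e : R, 0 < e ->
    exists2 del : R, 0 < del &
      forall z, D z -> d z x < del -> d' (f z) (f x) < e.

Definition open_map_on : Prop :=
  forall U, U `<=` D -> d_open d U -> d_open d' (f @` U).

Definition discrete_map_on : Prop :=
  forall x, D x -> exists2 r : R, 0 < r &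
    forall z, D z -> f z = f x -> d z x < r -> z = x.

Definition image_family (Gam : set (R -> T)) : set (R -> T') :=
  [set f \o g | g in Gam].

Definition is_lifting (beta : R -> T') (x : T) (a c : R) (al : R -> T) : Prop :=
  [/\ al a = x, cont_on d al [set t | a <= t < c],
      (forall t, a <= t < c -> D (al t)) &
      (forall t, a <= t < c -> f (al t) = beta t)].

Definition maximal_lifting (beta : R -> T') (x : T) (a b c : R)
    (al : R -> T) : Prop :=
  [/\ a < c <= b, is_lifting beta x a c al &
      ~ (exists (c' : R) (al' : R -> T),
           [/\ c < c' <= b, is_lifting beta x a c' al' &
               forall t, a <= t < c -> al' t = al t])].

Definition condition_A : Prop :=
  forall (beta : R -> T') (a b : R), a < b ->
    cont_on d' beta [set t | a <= t < b] ->
    forall x, D x -> f x = beta a ->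
      exists (c : R) (al : R -> T), maximal_lifting beta x a b c al.

End MappingDefs.

Definition ring_Q_map {R : realType} {dsp dsp' : measure_display}
  {T : measurableType dsp} {T' : measurableType dsp'}
  (d : T -> T -> R) (d' : T' -> T' -> R)
  (mu : {measure set T -> \bar R}) (mu' : {measure set T' -> \bar R})
  (alpha alpha' : R) (D : set T) (f : T -> T') (Q : T -> \bar R) (x0 : T) : Prop :=
  forall r1 r2 : R, 0 < r1 -> r1 < r2 ->
  forall eta : lebR R -> \bar R,
    measurable_fun [set r : lebR R | (r1 < r < r2)%R] eta ->
    (forall r, r1 < r < r2 -> (0 <= eta r)%E) ->
    (1 <= \int[completed_lebesgue_measure]_(r in [set r : lebR R | (r1 < r < r2)%R]) eta r)%E ->
    (modulus d' mu' alpha'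
       (image_family f
          ([set g | curve_family d (msphere d x0 r1) (msphere d x0 r2)
                      (mannulus d x0 r1 r2) g /\
                    forall t : R, (0 <= t <= 1)%R -> D (g t)]))
     <= \int[mu]_(x in mannulus d x0 r1 r2 `&` D)
          (Q x * (eta (d x x0) `^ alpha)))%E.

(* Main.v *)
Require Import Defs.
From HB Require Import structures.
From mathcomp Require Import all_boot all_order all_algebra.
From mathcomp Require Import all_classical all_reals all_analysis.
From mathcomp Require Import measurable_realfun.
From mathcomp Require Import ring lra.
From Stdlib Require Classical_Prop.
Import Order.TTheory GRing.Theory Num.Theory.
Local Open Scope classical_set_scope.
Local Open Scope ring_scope.

Import HBNNSimple.

Section shift_fun.
Context {R : realType} (A : R).
Definition shf : measurableTypeR R -> measurableTypeR R := fun y => y - A.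
Lemma mshf : measurable_fun [set: measurableTypeR R] shf.
Proof. by apply: measurable_funB. Qed.
HB.instance Definition _ := isMeasurableFun.Build _ _ _ _ shf mshf.
End shift_fun.

Lemma lebesgue_measure_shift {R : realType} (A : R) (S : set (measurableTypeR R)) :
  measurable S ->
  (@lebesgue_measure R) (shf A @^-1` S) = lebesgue_measure S.
Proof.
move=> mS.
rewrite -[LHS]/(pushforward lebesgue_measure (shf A) S).
apply/esym/lebesgue_measure_unique => //= _ [[a b]] _ <-.
rewrite /pushforward.
rewrite (_ : (shf A) @^-1` _ = `]a + A, b + A]%classic); last first.
  apply/seteqP; split => y /=; rewrite /shf !in_itv /= => /andP[h1 h2]; apply/andP; split.
  1-4: lra.
rewrite /= !lebesgue_measure_itv /= !lte_fin ltrD2r.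
by rewrite -!EFinD opprD addrACA subrr addr0.
Qed.

Section shift_nnsfun.
Context {R : realType} (h : {nnsfun measurableTypeR R >-> R}) (A : R).

Definition hsh : measurableTypeR R -> R := fun y => h (shf A y).

Let mhsh : measurable_fun [set: measurableTypeR R] hsh.
Proof. exact: measurableT_comp (measurable_funPT h) (mshf A). Qed.

Let fhsh : finite_set (range hsh).
Proof.
apply: sub_finite_set (@fimfunP _ _ h) => _ [y _ <-]; by exists (shf A y).
Qed.

Let nhsh : forall x, 0 <= hsh x.
Proof. by move=> x; exact: fun_ge0. Qed.

HB.instance Definition _ := isMeasurableFun.Build _ _ _ _ hsh mhsh.
HB.instance Definition _ := FiniteImage.Build _ _ hsh fhsh.
HB.instance Definition _ := isNonNegFun.Build _ _ hsh nhsh.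

Definition hsh_nnsfun : {nnsfun measurableTypeR R >-> R} := hsh.

Lemma sintegral_hsh : sintegral lebesgue_measure hsh_nnsfun = sintegral lebesgue_measure h.
Proof.
rewrite /sintegral; apply: eq_fsbigr => r _; congr (_ * _)%E.
transitivity (lebesgue_measure (shf A @^-1` (h @^-1` [set r]))) => //.
apply: lebesgue_measure_shift.
by rewrite -[X in measurable X]setTI; apply: (measurable_funPT h).
Qed.

End shift_nnsfun.

Lemma gen_le_integral d (T : measurableType d) (R : realType)
  (mu : {measure set T -> \bar R}) (D1 D2 : set T) (f g : T -> \bar R) :
  (forall x, D1 x -> 0 <= f x)%E -> (forall x, D2 x -> 0 <= g x)%E ->
  D1 `<=` D2 -> (forall x, D1 x -> f x <= g x)%E ->
  (\int[mu]_(x in D1) f x <= \int[mu]_(x in D2) g x)%E.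
Proof.
move=> f0 g0 D12 fg; rewrite !ge0_integralE //.
apply: ereal_sup_le => _ [h hf <-]; exists h => //= x.
apply: le_trans (hf x) _; rewrite /patch.
case: ifPn => [/set_mem x1|_]; last first.
  by case: ifPn => [/set_mem x2|_] //; exact: g0.
by rewrite (mem_set (D12 _ x1)); exact: fg.
Qed.

Lemma shift_le_integral (R : realType) (F : R -> \bar R) (A L L' : R) :
  (forall x, 0 <= F x)%E -> 0 <= A -> A + L <= L' ->
  (\int[lebesgue_measure]_(s in [set s : R | (0 <= s <= L)%R]) F (s + A)%R <=
   \int[lebesgue_measure]_(s in [set s : R | (0 <= s <= L')%R]) F s)%E.
Proof.
move=> F0 A0 AL; rewrite !ge0_integralE //.
apply: ge_ereal_sup => _ [h hf <-]; apply: ereal_sup_ubound.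
exists (hsh_nnsfun h A); last exact: sintegral_hsh.
move=> y /=; have := hf (y - A); rewrite /patch /hsh_nnsfun /hsh /shf /=.
case: ifPn => [/set_mem /= /andP[h1 h2]|_] H.
  rewrite mem_set; last by apply/andP; split; lra.
  by rewrite subrK in H.
apply: le_trans H _; case: ifPn => _ //.
Qed.

Lemma ge0_integralZl_gen d (T : measurableType d) (R : realType)
  (mu : {measure set T -> \bar R}) (D : set T) (f : T -> \bar R) (k : R) :
  0 < k -> (forall x, D x -> 0 <= f x)%E ->
  (\int[mu]_(x in D) (k%:E * f x) = k%:E * \int[mu]_(x in D) f x)%E.
Proof.
move=> k0 f0; rewrite !ge0_integralE //; last first.
  by move=> x Dx; apply: mule_ge0; [rewrite lee_fin ltW | exact: f0].
rewrite -ereal_sup_pZl //; congr ereal_sup; apply/seteqP; split.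
- move=> _ [h hf <-].
  have ki : 0 <= k^-1 by rewrite invr_ge0 ltW.
  exists (sintegral mu (scale_nnsfun h ki)).
    exists (scale_nnsfun h ki) => // x /=.
    have := hf x; rewrite /patch; case: ifPn => _ H; last first.
      have p0 : (point : \bar R) = 0%E by []. rewrite p0 in H *. by rewrite -[0%E](mule0 (k^-1)%:E) EFinM lee_wpmul2l // lee_fin.
    rewrite EFinM -[f x](mul1e) -(mulVf (lt0r_neq0 k0)) EFinM -muleA.
    by rewrite lee_wpmul2l // lee_fin.
  rewrite /scale_nnsfun sintegralrM muleA -EFinM mulfV ?mul1e //.
  by rewrite lt0r_neq0.
- move=> _ [_ [h hf <-] <-].
  exists (scale_nnsfun h (ltW k0)); last by rewrite /scale_nnsfun sintegralrM.
  move=> x /=; have := hf x; rewrite /patch; case: ifPn => _ H.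
    by rewrite EFinM lee_wpmul2l // lee_fin ltW.
  have p0 : (point : \bar R) = 0%E by []. rewrite p0 in H *. by rewrite EFinM -[0%E](mule0 k%:E) lee_wpmul2l // lee_fin ltW.
Qed.

Section Lengths.
Context {R : realType} {T : Type} (d : T -> T -> R) (Hd : is_metric d).

Definition psums (g : R -> T) (a b : R) : set (\bar R) :=
  [set x | exists (n : nat) (t : nat -> R),
     [/\ t 0%N = a, t n = b, (forall i, (i < n)%N -> t i <= t i.+1) &
         x = (\sum_(i < n) d (g (t i)) (g (t i.+1)))%:E]].

Lemma curve_lengthE g a b : curve_length d g a b = ereal_sup (psums g a b).
Proof. by []. Qed.

Let d0 x y : 0 <= d x y.
Proof. by case: Hd => H _ _ _; exact: H. Qed.
Let dxx x : d x x = 0.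
Proof. by case: Hd => _ H _ _; apply/H. Qed.
Let dtri x y z : d x z <= d x y + d y z.
Proof. by case: Hd => _ _ _ H; exact: H. Qed.

Lemma chain_mono (t : nat -> R) n :
  (forall i, (i < n)%N -> t i <= t i.+1) ->
  forall i j, (i <= j)%N -> (j <= n)%N -> t i <= t j.
Proof.
move=> mt i j ij jn; elim: j ij jn => [|j IH] ij jn.
  by rewrite leqn0 in ij; rewrite (eqP ij).
case: (ltngtP i j.+1) ij => // [ij|->] _ //.
apply: le_trans (IH _ _) (mt _ _) => //; by rewrite ltnW.
Qed.

Lemma psums_ge0 g a b x : psums g a b x -> (0 <= x)%E.
Proof.
move=> [n [t [_ _ _ ->]]]; rewrite lee_fin; apply: sumr_ge0 => i _; exact: d0.
Qed.

Lemma psums_single g a b : a <= b -> psums g a b (d (g a) (g b))%:E.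
Proof.
move=> ab; exists 1%N, (fun i => if i == 0%N then a else b); split => //.
  by move=> i; rewrite ltnS leqn0 => /eqP ->.
by rewrite big_ord1.
Qed.

Lemma psums_refl g a : psums g a a 0%E.
Proof.
exists 0%N, (fun => a); split => //; by rewrite big_ord0.
Qed.

Lemma curve_length_ge0 g a b : a <= b -> (0 <= curve_length d g a b)%E.
Proof.
move=> ab; rewrite curve_lengthE.
apply: le_trans (@ereal_sup_ubound _ (psums g a b) _ (psums_single g a b ab)).
by rewrite lee_fin.
Qed.

Lemma psums_cat g a m b x1 x2 :
  psums g a m x1 -> psums g m b x2 -> psums g a b (x1 + x2)%E.
Proof.
move=> [n1 [t1 [t10 t1n mt1 ->]]] [n2 [t2 [t20 t2n mt2 ->]]].
pose u i := if (i <= n1)%N then t1 i else t2 (i - n1)%N.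
have uE i : (n1 <= i)%N -> u i = t2 (i - n1)%N.
  move=> h; rewrite /u; case: ifPn => // h2.
  have -> : i = n1 by apply/eqP; rewrite eqn_leq h2 h.
  by rewrite subnn t20 t1n.
exists (n1 + n2)%N, u; split.
- by rewrite /u leq0n.
- by rewrite uE ?leq_addr // addKn.
- move=> i ilt; case: (ltnP i n1) => h.
    by rewrite /u h ltnW //; exact: mt1.
  rewrite !uE ?(leq_trans h) // subSn //; apply: mt2.
  by rewrite ltn_subLR.
- rewrite big_split_ord /= EFinD; congr (_ + _)%E; apply/congr1.
    by apply: eq_bigr => i _; rewrite /u /= (ltnW (ltn_ord i)) (ltn_ord i).
  apply: eq_bigr => i _; rewrite /= !uE ?leq_addr //.
    by rewrite addKn -addnS addKn.
  by rewrite -addnS leq_addr.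
Qed.

Lemma psums_split g a m b x : a <= m -> m <= b -> psums g a b x ->
  exists x1 x2, [/\ psums g a m x1, psums g m b x2 & (x <= x1 + x2)%E].
Proof.
move=> am mb [n [t [t0 tn mt ->]]].
pose P := fun i => (i <= n)%N && (t i <= m).
have exP : exists i, P i by exists 0%N; rewrite /P leq0n t0 am.
have ubP : forall i, P i -> (i <= n)%N by move=> i /andP[].
case: (ex_maxnP exP ubP) => k /andP[kn tkm] kmax.
case: (ltnP k n) => [kn'|nk]; last first.
  have kn2 : k = n by apply/eqP; rewrite eqn_leq kn nk.
  have mb' : m = b by apply/le_anti; rewrite mb -tn -kn2 tkm.
  exists (\sum_(i < n) d (g (t i)) (g (t i.+1)))%:E, 0%E; split.
  - by exists n, t; split => //; rewrite tn mb'.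
  - rewrite mb'; exact: psums_refl.
  - by rewrite adde0.
have mlt : m < t k.+1.
  rewrite ltNge; apply/negP => H; have := kmax k.+1.
  by rewrite /P kn' H => /(_ isT); rewrite ltnn.
exists ((\sum_(i < k) d (g (t i)) (g (t i.+1))) + d (g (t k)) (g m))%:E.
exists (d (g m) (g (t k.+1)) + \sum_(k.+1 <= i < n) d (g (t i)) (g (t i.+1)))%:E.
split.
- exists k.+1, (fun i => if (i <= k)%N then t i else m); split.
  + by rewrite leq0n.
  + by rewrite ltnn.
  + move=> i; rewrite ltnS => ik; rewrite ik; case: (ltnP i k) => h.
      by apply: mt; exact: ltn_trans h kn'.
    have -> : i = k by apply/eqP; rewrite eqn_leq ik h.
    by [].
  + rewrite big_ord_recr /= leqnn ltnn; congr ((_ + _)%:E).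
    by apply: eq_bigr => i _; rewrite (ltnW (ltn_ord i)) (ltn_ord i).
- exists (n - k)%N, (fun i => if i == 0%N then m else t (k + i)%N); split.
  + by [].
  + by rewrite subn_eq0 leqNgt kn' /= subnKC // ltnW.
  + move=> i ilt; case: i ilt => [|i] ilt /=.
      by rewrite addn1 ltW.
    by rewrite [(k + i.+2)%N]addnS; apply: mt; rewrite -ltn_subRL.
  + rewrite -(subnSK kn') big_ord_recl /= addn1.
    rewrite -[k.+1]add0n big_addn big_mkord.
    congr ((_ + _)%:E); apply: eq_bigr => i _ /=.
    have -> : bump 0 i = i.+1 by [].
    by rewrite !addnS addnC.
- rewrite lee_fin -(big_mkord xpredT (fun i => d (g (t i)) (g (t i.+1)))) (big_cat_nat (n:=k.+1)) //= /=.
  rewrite big_mkord big_ord_recr /=.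
  have := dtri (g (t k)) (g m) (g (t k.+1)); lra.
Qed.

Lemma curve_length_add g a m b : a <= m -> m <= b ->
  (curve_length d g a b < +oo)%E ->
  curve_length d g a b = (curve_length d g a m + curve_length d g m b)%E.
Proof.
move=> am mb fin.
have ab : a <= b by exact: le_trans am mb.
have L0 := curve_length_ge0 g a b ab.
have m0 := curve_length_ge0 g a m am.
have Lf : curve_length d g a b \is a fin_num by rewrite ge0_fin_numE.
move: Lf L0 m0 fin; rewrite !curve_lengthE => Lf L0 m0 fin.
apply/le_anti/andP; split.
  apply: ge_ereal_sup => x Hx.
  case: (psums_split _ _ _ _ _ am mb Hx) => x1 [x2 [h1 h2 le]].
  by apply: le_trans le _; apply: leeD; exact: ereal_sup_ubound.
have stepA : forall x2, psums g m b x2 ->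
    (ereal_sup (psums g a m) <= ereal_sup (psums g a b) - x2)%E.
  move=> x2 h2; apply: ge_ereal_sup => x1 h1.
  rewrite lee_suber_addr //; apply: ereal_sup_ubound.
  exact: psums_cat _ _ _ _ _ _ h1 h2.
have s1f : ereal_sup (psums g a m) \is a fin_num.
  rewrite ge0_fin_numE //.
  apply: le_lt_trans (stepA _ (psums_single g m b mb)) _.
  by move: Lf; case: (ereal_sup (psums g a b)) => // r _; rewrite -EFinB ltry.
rewrite -lee_suber_addl //.
apply: ge_ereal_sup => x2 h2.
rewrite lee_suber_addl // -lee_suber_addr //; exact: stepA.
Qed.

Lemma curve_length_reparam (be ga : R -> T) a bb s : a < bb -> 0 <= s <= 1 ->
  (forall u, 0 <= u <= 1 -> ga u = be (a + u * (bb - a))) ->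
  curve_length d ga 0 s = curve_length d be a (a + s * (bb - a)).
Proof.
move=> abb /andP[s0 s1] hg; rewrite !curve_lengthE; congr ereal_sup.
have q0 : 0 < bb - a by rewrite subr_gt0.
have qn0 : bb - a != 0 by rewrite lt0r_neq0.
apply/seteqP; split.
- move=> _ [n [t [t0 tn mt ->]]].
  have tin i : (i <= n)%N -> 0 <= t i <= 1.
    move=> ilen; have := chain_mono _ _ mt _ _ (leq0n i) ilen.
    have := chain_mono _ _ mt _ _ ilen (leqnn n); rewrite t0 tn => h1 h2.
    by apply/andP; split => //; exact: le_trans h1 s1.
  exists n, (fun i => a + t i * (bb - a)); split.
  + by rewrite t0 mul0r addr0.
  + by rewrite tn.
  + by move=> i ilt; rewrite lerD2l; apply: ler_wpM2r; [exact: ltW | exact: mt].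
  + congr EFin; apply: eq_bigr => i _; rewrite !hg //; apply: tin.
      exact: ltn_ord.
    exact: ltnW (ltn_ord i).
- move=> _ [n [u [u0 un mu ->]]].
  have uin i : (i <= n)%N -> a <= u i <= a + s * (bb - a).
    move=> ilen; have := chain_mono _ _ mu _ _ (leq0n i) ilen.
    have := chain_mono _ _ mu _ _ ilen (leqnn n); rewrite u0 un => h1 h2.
    by apply/andP; split.
  have key i : (i <= n)%N -> 0 <= (u i - a) / (bb - a) <= 1 /\
      a + (u i - a) / (bb - a) * (bb - a) = u i.
    move=> /uin /andP[h1 h2]; split; last by rewrite divfK // addrC subrK.
    apply/andP; split; first by apply: divr_ge0; rewrite ?subr_ge0 // ltW.
    rewrite ler_pdivrMr // mul1r.
    have : s * (bb - a) <= bb - a by rewrite -[X in _ <= X]mul1r; apply: ler_wpM2r => //; exact: ltW.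
    lra.
  exists n, (fun i => (u i - a) / (bb - a)); split.
  + by rewrite u0 subrr mul0r.
  + by rewrite un addrC addKr mulfK.
  + by move=> i ilt; apply: ler_wpM2r; [rewrite invr_ge0 ltW | rewrite lerD2r; exact: mu].
  + congr EFin; apply: eq_bigr => i _.
    have [k1 e1] := key i (ltnW (ltn_ord i)).
    have [k2 e2] := key i.+1 (ltn_ord i).
    by rewrite !hg // e1 e2.
Qed.

Lemma cl_sub g v u w : v <= u -> u <= w -> (curve_length d g v w < +oo)%E ->
  [/\ (curve_length d g v u <= curve_length d g v w)%E,
      (curve_length d g u w <= curve_length d g v w)%E,
      curve_length d g v u \is a fin_num &
      curve_length d g u w \is a fin_num].
Proof.
move=> vu uw fin; have e := curve_length_add g _ _ _ vu uw fin.
have h1 := curve_length_ge0 g v u vu; have h2 := curve_length_ge0 g u w uw.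
have c1 : (curve_length d g v u <= curve_length d g v w)%E by rewrite e leeDl.
have c2 : (curve_length d g u w <= curve_length d g v w)%E by rewrite e leeDr.
split => //; rewrite ge0_fin_numE //; exact: le_lt_trans fin.
Qed.

Lemma subcurve_len (be ga : R -> T) a bb : 0 <= a -> a < bb -> bb <= 1 ->
  rectifiable d be ->
  (forall u, 0 <= u <= 1 -> ga u = be (a + u * (bb - a))) ->
  [/\ rectifiable d ga,
      (forall s, 0 <= s <= 1 -> fine (curve_length d be 0 a) +
          fine (curve_length d ga 0 s) = fine (curve_length d be 0 (a + s * (bb - a)))),
      0 <= fine (curve_length d be 0 a) &
      fine (curve_length d be 0 a) + fine (curve_length d ga 0 1) <=
        fine (curve_length d be 0 1)].
Proof.
move=> a0 abb bb1 rb hg.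
have a1 : a <= 1 by apply: le_trans bb1; exact: ltW.
have ab : a <= bb by exact: ltW.
have uin s : 0 <= s <= 1 -> a <= a + s * (bb - a) <= bb.
  move=> /andP[s0 s1]; have q0 : 0 <= bb - a by rewrite subr_ge0.
  have : s * (bb - a) <= bb - a by rewrite -[X in _ <= X]mul1r; exact: ler_wpM2r.
  have : 0 <= s * (bb - a) by exact: mulr_ge0.
  move=> *; apply/andP; split; lra.
have main s : 0 <= s <= 1 ->
    [/\ curve_length d ga 0 s = curve_length d be a (a + s * (bb - a)),
        curve_length d be 0 (a + s * (bb - a)) =
          (curve_length d be 0 a + curve_length d be a (a + s * (bb - a)))%E,
        curve_length d be 0 a \is a fin_num &
        curve_length d be a (a + s * (bb - a)) \is a fin_num].
  move=> sin; have /andP[u1 u2] := uin s sin.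
  have u21 : a + s * (bb - a) <= 1 by exact: le_trans bb1.
  have [c1 _ f1 _] := cl_sub be _ _ _ (le_trans a0 u1) u21 rb.
  have fin' : (curve_length d be 0 (a + s * (bb - a)) < +oo)%E.
    exact: le_lt_trans c1 rb.
  have [_ _ f2 f3] := cl_sub be _ _ _ a0 u1 fin'.
  split => //; first exact: curve_length_reparam.
  exact: curve_length_add.
have s1 : 0 <= (1 : R) <= 1 by rewrite ler01 lexx.
have [e1 e2 f1 f2] := main 1 s1.
have bbE : a + 1 * (bb - a) = bb by rewrite mul1r addrC subrK.
rewrite bbE in e1 e2 f2.
have [cb _ fb _] := cl_sub be _ _ _ (le_trans a0 ab) bb1 rb.
split.
- rewrite /rectifiable e1; apply: le_lt_trans rb.
  apply: le_trans cb; rewrite e2; apply: leeDr; exact: curve_length_ge0.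
- move=> s sin; have [g1 g2 g3 g4] := main s sin.
  by rewrite g1 g2 fineD.
- by apply: fine_ge0; exact: curve_length_ge0.
- rewrite e1 -fineD // -e2; apply: fine_le => //.
  by rewrite ge0_fin_numE ?curve_length_ge0 // ler01.
Qed.
End Lengths.

Set Implicit Arguments.
Unset Strict Implicit.

Definition rcont {R : realType} (phi : R -> R) (a b : R) :=
  forall t, a <= t <= b -> forall e, 0 < e -> exists2 del, 0 < del &
    forall s, a <= s <= b -> `|s - t| < del -> `|phi s - phi t| < e.

Lemma first_hit {R : realType} (phi : R -> R) a b v : a <= b -> rcont phi a b ->
  phi a < v -> v <= phi b ->
  exists T, [/\ a < T <= b, phi T = v & forall t, a <= t < T -> phi t < v].
Proof.
move=> ab cphi pa pb.
pose G := [set t | a <= t <= b /\ forall u, a <= u <= t -> phi u < v].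
have Ga : G a.
  split; first by rewrite lexx ab.
  by move=> u /andP[h1 h2]; have -> : u = a by apply/le_anti; rewrite h1 h2.
have G0 : G !=set0 by exists a.
have Gub : ubound G b by move=> t [/andP[]].
have hG : has_sup G by split => //; exists b.
set T := sup G.
have aT : a <= T by exact: sup_upper_bound.
have Tb : T <= b by exact: ge_sup.
have below : forall t, a <= t < T -> phi t < v.
  move=> t /andP[hat tT].
  have e0 : 0 < T - t by rewrite subr_gt0.
  have [g [_ Hg] gt] := sup_adherent e0 hG.
  apply: Hg; apply/andP; split => //; move: gt; rewrite -/T; lra.
have phiT : phi T = v.
  case: (ltgtP (phi T) v) => // h.
  - have Tb' : T < b.
      rewrite lt_neqAle Tb andbT; apply/negP => /eqP Tb2.
      by move: pb; rewrite -Tb2 leNgt h.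
    have TT : a <= T <= b by rewrite aT Tb.
    have e0 : 0 < v - phi T by rewrite subr_gt0.
    have [del del0 Hdel] := cphi T TT (v - phi T) e0.
    pose t' := if T + del / 2 <= b then T + del / 2 else b.
    have Tt' : T < t' by rewrite /t'; case: ifPn => _; lra.
    have t'b : t' <= b by rewrite /t'; case: ifPn => //; lra.
    have t'T : t' - T < del by rewrite /t'; case: ifPn => h2; lra.
    have : G t'.
      split; first by apply/andP; split => //; lra.
      move=> u /andP[au ut']; case: (ltP u T) => uT; first by apply: below; rewrite au uT.
      have ub : a <= u <= b by rewrite au (le_trans ut' t'b).
      have ud : `|u - T| < del by rewrite ltr_norml; apply/andP; split; lra.
      have := Hdel u ub ud; rewrite ltr_norml; lra.
    move=> /sup_upper_bound => /(_ hG); rewrite -/T; lra.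
  - have aT' : a < T.
      rewrite lt_neqAle aT andbT; apply/negP => /eqP aT2.
      by move: pa; rewrite aT2 ltNge (ltW h).
    have TT : a <= T <= b by rewrite aT Tb.
    have e0 : 0 < phi T - v by rewrite subr_gt0.
    have [del del0 Hdel] := cphi T TT (phi T - v) e0.
    pose t' := if a <= T - del / 2 then T - del / 2 else a.
    have t'T : t' < T by rewrite /t'; case: ifPn => _; lra.
    have at' : a <= t' by rewrite /t'; case: ifPn => //; lra.
    have Tt' : T - t' < del by rewrite /t'; case: ifPn => h2; lra.
    have h1 : a <= t' < T by rewrite at' t'T.
    have h2 : a <= t' <= b by rewrite at' (le_trans (ltW t'T) Tb).
    have h3 : `|t' - T| < del by rewrite ltr_norml; apply/andP; split; lra.
    have := below t' h1; have := Hdel t' h2 h3; rewrite ltr_norml; lra.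
exists T; split => //.
rewrite lt_neqAle aT Tb !andbT; apply/negP => /eqP aT2.
by move: pa; rewrite aT2 phiT ltxx.
Qed.

Lemma rcont_sub {R : realType} (phi : R -> R) a b a' b' :
  a <= a' -> b' <= b -> rcont phi a b -> rcont phi a' b'.
Proof.
move=> aa bb c t /andP[h1 h2] e e0.
have ht : a <= t <= b by apply/andP; split; [exact: le_trans h1|exact: le_trans bb].
have [del del0 H] := c t ht e e0; exists del => // s /andP[s1 s2] sd.
apply: H sd; apply/andP; split; [exact: le_trans s1|exact: le_trans bb].
Qed.

Lemma rcont_rev {R : realType} (phi : R -> R) a b :
  rcont phi a b -> rcont (fun s => - phi (a + b - s)) a b.
Proof.
move=> c t /andP[h1 h2] e e0.
have ht : a <= a + b - t <= b by apply/andP; split; lra.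
have [del del0 H] := c _ ht e e0; exists del => // s /andP[s1 s2] sd.
have hs : a <= a + b - s <= b by apply/andP; split; lra.
have sd' : `|(a + b - s) - (a + b - t)| < del.
  by rewrite (_ : _ - _ = - (s - t)) ?normrN //; ring.
by rewrite -opprD normrN; exact: H _ hs sd'.
Qed.

Lemma last_hit {R : realType} (phi : R -> R) a b v : a <= b -> rcont phi a b ->
  phi a <= v -> v < phi b ->
  exists T, [/\ a <= T < b, phi T = v & forall t, T < t <= b -> v < phi t].
Proof.
move=> ab c pa pb.
have c' := rcont_rev c.
have h1 : - phi (a + b - a) < - v by rewrite (_ : a + b - a = b) ?ltrN2 //; ring.
have h2 : - v <= - phi (a + b - b) by rewrite (_ : a + b - b = a) ?lerN2 //; ring.
have [T [/andP[aT Tb] pT Hb]] := first_hit ab c' h1 h2.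
exists (a + b - T); split.
- apply/andP; split; lra.
- by move/eqP: pT; rewrite eqr_opp => /eqP.
- move=> t /andP[t1 t2].
  have hs : a <= a + b - t < T by apply/andP; split; lra.
  have := Hb _ hs; rewrite (_ : a + b - (a + b - t) = t); last by ring.
  by rewrite ltrN2.
Qed.

Lemma ivt_down {R : realType} (phi : R -> R) a b v : a <= b -> rcont phi a b ->
  phi b < v -> v < phi a -> exists T, a < T <= b /\ phi T = v.
Proof.
move=> ab c pb pa.
have c' : rcont (fun s => - phi s) a b.
  move=> t ht e e0; have [del del0 H] := c t ht e e0; exists del => // s hs sd.
  by rewrite -opprD normrN; exact: H.
have h1 : - phi a < - v by rewrite ltrN2.
have h2 : - v <= - phi b by rewrite lerN2 ltW.
have [T [hT pT _]] := first_hit ab c' h1 h2.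
by exists T; split => //; move/eqP: pT; rewrite eqr_opp => /eqP.
Qed.

Section Metric.
Context {R : realType} {T : Type} (d : T -> T -> R) (Hd : is_metric d).

Lemma md0 x y : 0 <= d x y. Proof. by case: Hd => H _ _ _; exact: H. Qed.
Lemma mdxx x : d x x = 0. Proof. by case: Hd => _ H _ _; exact: (proj2 (H x x) erefl). Qed.
Lemma mdeq x y : d x y = 0 -> x = y. Proof. by case: Hd => _ H _ _; exact: (proj1 (H x y)). Qed.
Lemma mdC x y : d x y = d y x. Proof. by case: Hd => _ _ H _; exact: H. Qed.
Lemma mdtri x y z : d x z <= d x y + d y z. Proof. by case: Hd => _ _ _ H; exact: H. Qed.

Lemma mdlip x y z : `|d y x - d z x| <= d y z.
Proof.
rewrite ler_norml; have := mdtri y z x; have := mdtri z y x; rewrite (mdC z y).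
move=> *; apply/andP; split; lra.
Qed.

Lemma mball_open p r : d_open d (mball d p r).
Proof.
move=> x; rewrite /mball /= => hx; exists (r - d x p); first by rewrite subr_gt0.
move=> z; rewrite /mball /= => hz; have := mdtri z x p; lra.
Qed.

Lemma ball_sub_closure p r : mball d p r `<=` d_closure d (mball d p r).
Proof. by move=> x hx e e0; exists x => //; rewrite mdxx. Qed.

Lemma closure_ball_le p r x : d_closure d (mball d p r) x -> d x p <= r.
Proof.
move=> hx; rewrite leNgt; apply/negP => h.
have e0 : 0 < d x p - r by rewrite subr_gt0.
have [y hy hxy] := hx _ e0; move: hy; rewrite /mball /= => hy.
have := mdtri x y p; lra.
Qed.

Lemma closure_ball_mono p r r' : r <= r' ->
  d_closure d (mball d p r) `<=` d_closure d (mball d p r').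
Proof.
move=> rr x hx e e0; have [y hy hxy] := hx e e0; exists y => //.
move: hy; rewrite /mball /=; lra.
Qed.

Lemma mcluster (K : set T) (al : R -> T) (S : set R) (c : R) :
  d_compact d K -> (forall s, s < c -> exists t, [/\ S t, s < t & t < c]) ->
  (forall t, S t -> K (al t)) ->
  exists p, K p /\ forall r, 0 < r -> forall s, s < c ->
    exists t, [/\ S t, s < t, t < c & d (al t) p < r].
Proof.
move=> cK acc inK; apply: Classical_Prop.NNPP => H.
pose F := [set U | exists p r s, [/\ 0 < r, s < c,
   (forall t, S t -> s < t -> t < c -> r <= d (al t) p) & U = mball d p r]].
have Fo : forall U, F U -> d_open d U by move=> U [p [r [s [_ _ _ ->]]]]; exact: mball_open.
have Fc : K `<=` \bigcup_(U in F) U.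
  move=> p Kp; apply: Classical_Prop.NNPP => Hn.
  apply: H; exists p; split => // r r0 s sc; apply: Classical_Prop.NNPP => Hn2.
  apply: Hn; exists (mball d p r); last by rewrite /mball /= mdxx.
  exists p, r, s; split => // t St st tc; rewrite leNgt; apply/negP => dlt.
  by apply: Hn2; exists t.
have [n [g [gF Kc]]] := cK F Fo Fc.
have key : forall m, (m <= n)%N -> exists s0, s0 < c /\
    forall i, (i < m)%N -> forall t, S t -> s0 < t -> t < c -> ~ g i (al t).
  elim => [|m IH] mn.
    by exists (c - 1); split; [lra|].
  have [s0 [s0c Hs0]] := IH (ltnW mn).
  have [p [r [s [r0 sc Hs ge]]]] := gF m mn.
  pose s1 := if s0 <= s then s else s0.
  have s1c : s1 < c by rewrite /s1; case: ifPn.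
  have s01 : s0 <= s1 by rewrite /s1; case: ifPn => // _; exact: lexx.
  have ss1 : s <= s1 by rewrite /s1; case: ifPn => //; rewrite -ltNge => /ltW.
  exists s1; split => // i; rewrite ltnS leq_eqVlt => /orP[/eqP ->|im] t St st tc.
    rewrite ge /mball /= => h; have := Hs t St (le_lt_trans ss1 st) tc; lra.
  exact: Hs0 i im t St (le_lt_trans s01 st) tc.
have [s0 [s0c Hs0]] := key n (leqnn n).
have [t [St st tc]] := acc s0 s0c.
have [i /= ilt gi] := Kc _ (inK t St).
exact: Hs0 i ilt t St st tc gi.
Qed.

End Metric.

Definition clampe {R : realType} {T' : Type} (be : R -> T') (t : R) : T' :=
  be (if t <= 1 then t else 1).

Lemma clamp_cont {R : realType} {T' : Type} (d' : T' -> T' -> R) (be : R -> T') :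
  is_curve d' be -> cont_on d' (clampe be) [set t | 0 <= t < 2].
Proof.
move=> cb t /= /andP[t0 t2] e e0.
have ht' : 0 <= (if t <= 1 then t else 1) <= 1.
  by case: ifPn => h; apply/andP; split => //; lra.
have [del del0 H] := cb _ ht' e e0; exists del => // s /= /andP[s0 s2] sd.
apply: H.
  by rewrite /=; case: ifPn => h; apply/andP; split => //; lra.
move: sd; rewrite !ltr_norml.
by case: ifPn => h1; case: ifPn => h2; move=> /andP[h3 h4]; apply/andP; split; lra.
Qed.

Section Lift.
Context {R : realType} {T T' : Type} (d : T -> T -> R) (d' : T' -> T' -> R)
  (Hd : is_metric d) (Hd' : is_metric d') (D : set T) (f : T -> T').
Context (Hfc : cont_map_on d d' D f) (Hfd : discrete_map_on d D f).

Lemma rcont_of (al : R -> T) (c t1 t2 : R) (p : T) :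
  0 <= t1 -> t2 < c -> cont_on d al [set t | 0 <= t < c] ->
  rcont (fun t => d (al t) p) t1 t2.
Proof.
move=> t10 t2c ca t /andP[h1 h2] e e0.
have ht : 0 <= t < c by apply/andP; split; lra.
have [del del0 H] := ca t ht e e0; exists del => // s /andP[s1 s2] sd.
have hs : 0 <= s < c by apply/andP; split; lra.
apply: le_lt_trans (mdlip Hd _ _ _) (H s hs sd).
Qed.

Lemma lift_val (c : R) (al : R -> T) (be' : R -> T') (S : set R) (p : T) :
  0 <= c < 2 -> cont_on d' be' [set t | 0 <= t < 2] ->
  (forall t, S t -> 0 <= t < c) ->
  (forall t, 0 <= t < c -> D (al t) /\ f (al t) = be' t) -> D p ->
  (forall r, 0 < r -> forall s, s < c ->
    exists t, [/\ S t, s < t, t < c & d (al t) p < r]) ->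
  f p = be' c.
Proof.
move=> c02 bc Sin lift Dp clus; apply: Classical_Prop.NNPP => ne.
have eta0 : 0 < d' (f p) (be' c).
  rewrite lt_neqAle md0 // andbT; apply/negP => /eqP h.
  by apply: ne; apply: (mdeq Hd'); rewrite h.
have e2 : 0 < d' (f p) (be' c) / 2 by lra.
have [del1 del10 H1] := Hfc Dp e2.
have [del2 del20 H2] := bc c c02 _ e2.
have cd : c - del2 < c by rewrite gtrDl oppr_lt0.
have [t [St st tc dt]] := clus del1 del10 (c - del2) cd.
have tin := Sin t St; have [Dt ft] := lift t tin.
have h1 := H1 (al t) Dt dt.
have t02 : 0 <= t < 2 by move: tin c02 => /andP[? ?] /andP[? ?]; apply/andP; split; lra.
have td : `|t - c| < del2 by rewrite ltr_norml; apply/andP; split; lra.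
have h2 := H2 t t02 td.
have := mdtri Hd' (f p) (f (al t)) (be' c).
rewrite -ft in h2; rewrite (mdC Hd' (f p) (f (al t))); lra.
Qed.


Lemma lift_conv (K : set T) (c : R) (al : R -> T) (be' : R -> T') (p : T) :
  d_compact d K -> K `<=` D -> 0 < c < 2 -> cont_on d' be' [set t | 0 <= t < 2] ->
  cont_on d al [set t | 0 <= t < c] ->
  (forall t, 0 <= t < c -> [/\ D (al t), f (al t) = be' t & K (al t)]) -> K p ->
  (forall r, 0 < r -> forall s, s < c ->
     exists t, [/\ 0 <= t < c, s < t, t < c & d (al t) p < r]) ->
  forall r, 0 < r -> exists2 s, s < c & forall t, s < t < c -> d (al t) p < r.
Proof.
move=> cK KD /andP[c0 c2] bc ca lift Kp clus r r0.
have Dp := KD p Kp.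
have lift' : forall t, 0 <= t < c -> D (al t) /\ f (al t) = be' t.
  by move=> t /lift [].
have c02' : 0 <= c < 2 by rewrite c2 ltW.
have fp : f p = be' c.
  by apply: (@lift_val _ al _ (fun t => 0 <= t < c)).
have [r0' r0'0 Hdisc] := Hfd Dp.
apply: Classical_Prop.NNPP => Hn.
pose r' := if r <= r0' / 2 then r else r0' / 2.
have r'0 : 0 < r' by rewrite /r'; case: ifPn => _; lra.
have r'r : r' <= r by rewrite /r'; case: ifPn => h; lra.
have r'r0 : r' < r0' by rewrite /r'; case: ifPn => h; lra.
have far : forall s, s < c -> exists t, [/\ s < t, t < c & r <= d (al t) p].
  move=> s sc; apply: Classical_Prop.NNPP => H; apply: Hn; exists s => // t /andP[st tc].
  rewrite ltNge; apply/negP => h; apply: H; exists t; split => //.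
pose S2 := [set t | 0 <= t < c /\ r' / 2 <= d (al t) p <= r'].
have S2in : forall t, S2 t -> 0 <= t < c by move=> t [].
have acc : forall s, s < c -> exists t, [/\ S2 t, s < t & t < c].
  move=> s sc; pose s' := if s <= 0 then 0 else s.
  have s'c : s' < c by rewrite /s'; case: ifPn.
  have s'0 : 0 <= s' by rewrite /s'; case: ifPn => // h; lra.
  have ss' : s <= s' by rewrite /s'; case: ifPn => // h; lra.
  have [t1 [st1 t1c dt1]] := far s' s'c.
  have r2 : 0 < r' / 2 by lra.
  have [t2 [ht2 t12 t2c dt2]] := clus _ r2 t1 t1c.
  have t10 : 0 <= t1 by lra.
  have rc := rcont_of p t10 t2c ca.
  have i1 : d (al t2) p < 3 * r' / 4 by lra.
  have i2 : 3 * r' / 4 < d (al t1) p by lra.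
  have [T0 [/andP[hT1 hT2] hT]] := ivt_down (ltW t12) rc i1 i2.
  exists T0; split; [split|lra|lra].
    apply/andP; split; lra.
  rewrite /= hT; apply/andP; split; lra.
have inK : forall t, S2 t -> K (al t) by move=> t /S2in /lift [].
have [q [Kq clq]] := mcluster Hd cK acc inK.
have Dq := KD q Kq.
have fq : f q = be' c by exact: (@lift_val _ al _ S2).
have dq1 : r' / 2 <= d q p.
  rewrite leNgt; apply/negP => h.
  have e0 : 0 < r' / 2 - d q p by lra.
  have cc : c - 1 < c by lra.
  have [t [[_ /andP[ht1 _]] _ _ htq]] := clq _ e0 (c - 1) cc.
  have := mdtri Hd (al t) q p; lra.
have dq2 : d q p <= r'.
  rewrite leNgt; apply/negP => h.
  have e0 : 0 < d q p - r' by lra.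
  have cc : c - 1 < c by lra.
  have [t [[_ /andP[_ ht2]] _ _ htq]] := clq _ e0 (c - 1) cc.
  have := mdtri Hd q (al t) p; rewrite (mdC Hd q (al t)); lra.
have qp : q = p by apply: Hdisc => //; [rewrite fq fp | lra].
by move: dq1; rewrite qp (mdxx Hd); lra.
Qed.


Lemma concat_cont (g1 g2 : R -> T) (c c2 : R) (p : T) : 0 < c -> c < c2 ->
  cont_on d g1 [set t | 0 <= t < c] -> cont_on d g2 [set t | c <= t < c2] ->
  g2 c = p ->
  (forall r, 0 < r -> exists2 s, s < c & forall t, s < t < c -> d (g1 t) p < r) ->
  cont_on d (fun t => if t < c then g1 t else g2 t) [set t | 0 <= t < c2].
Proof.
move=> c0 cc2 k1 k2 g2c conv t /andP[t0 tc2] e e0.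
case: (ltgtP t c) => tc.
- have ht : 0 <= t < c by rewrite t0 tc.
  have [del1 del10 H] := k1 t ht e e0.
  pose del := if del1 <= c - t then del1 else c - t.
  have dl1 : del <= del1 by rewrite /del; case: ifPn => h; lra.
  have dl2 : del <= c - t by rewrite /del; case: ifPn => h; lra.
  have dl0 : 0 < del by rewrite /del; case: ifPn => h; lra.
  exists del => // s /andP[s0 sc2]; rewrite ltr_norml => /andP[h1 h2].
  have sc : s < c by lra.
  rewrite sc; apply: H; first by rewrite /= s0 sc.
  rewrite ltr_norml; apply/andP; split; lra.
- have ht : c <= t < c2 by rewrite tc2 ltW.
  have [del1 del10 H] := k2 t ht e e0.
  pose del := if del1 <= t - c then del1 else t - c.
  have dl1 : del <= del1 by rewrite /del; case: ifPn => h; lra.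
  have dl2 : del <= t - c by rewrite /del; case: ifPn => h; lra.
  have dl0 : 0 < del by rewrite /del; case: ifPn => h; lra.
  exists del => // s /andP[s0 sc2]; rewrite ltr_norml => /andP[h1 h2].
  have sc : ~~ (s < c) by rewrite -leNgt; lra.
  have tc' : ~~ (t < c) by rewrite -leNgt ltW.
  rewrite (negbTE sc); apply: H.
    by rewrite /= sc2 leNgt sc.
  rewrite ltr_norml; apply/andP; split; lra.
- subst t.
  have ht : c <= c < c2 by rewrite lexx cc2.
  have [del1 del10 H] := k2 c ht e e0.
  have [s0 s0c Hs0] := conv e e0.
  pose del := if del1 <= c - s0 then del1 else c - s0.
  have dl1 : del <= del1 by rewrite /del; case: ifPn => h; lra.
  have dl2 : del <= c - s0 by rewrite /del; case: ifPn => h; lra.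
  have dl0 : 0 < del by rewrite /del; case: ifPn => h; lra.
  exists del => // s /andP[s0' sc2]; rewrite ltr_norml => /andP[h1 h2].
  case: ifPn => sc.
    by rewrite g2c; apply: Hs0; apply/andP; split; lra.
  apply: H; first by rewrite /= sc2 leNgt sc.
  rewrite ltr_norml; apply/andP; split; lra.
Qed.

End Lift.

Section Lift2.
Context {R : realType} {T T' : Type} (d : T -> T -> R) (d' : T' -> T' -> R)
  (Hd : is_metric d) (Hd' : is_metric d') (D : set T) (f : T -> T').
Context (Hfc : cont_map_on d d' D f) (Hfd : discrete_map_on d D f)
  (HA : condition_A d d' D f).

Lemma cont_on_sub (g : R -> T') (I J : set R) : J `<=` I -> cont_on d' g I -> cont_on d' g J.
Proof.
move=> JI c t Jt e e0; have [del del0 H] := c t (JI t Jt) e e0.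
by exists del => // s Js; apply: H; exact: JI.
Qed.

Lemma lift_escape (x0 : T) (eps0 : R) (be : R -> T') (x : T) (c : R) (al : R -> T) :
  d_compact d (d_closure d (mball d x0 eps0)) ->
  d_closure d (mball d x0 eps0) `<=` D ->
  is_curve d' be -> ~ (f @` mball d x0 eps0) (be 1) ->
  maximal_lifting d D f (clampe be) x 0 2 c al ->
  exists ts, [/\ 0 <= ts, ts < c, ts <= 1 & eps0 <= d (al ts) x0].
Proof.
move=> cK KD cb nb [/andP[c0 c2] [al0 alc alD alf] nomax].
have bc := clamp_cont cb.
apply: Classical_Prop.NNPP => Hn.
have inB : forall t, 0 <= t < c -> t <= 1 -> d (al t) x0 < eps0.
  move=> t /andP[t0 tc] t1; rewrite ltNge; apply/negP => h; apply: Hn.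
  by exists t.
case: (ltP 1 c) => c1.
  apply: nb; exists (al 1); first by rewrite /mball /=; apply: inB => //; rewrite ler01.
  by rewrite alf ?ler01 // /clampe lexx.
have lift : forall t, 0 <= t < c ->
    [/\ D (al t), f (al t) = clampe be t & d_closure d (mball d x0 eps0) (al t)].
  move=> t ht; split; [exact: alD | exact: alf |].
  apply: ball_sub_closure => //; rewrite /mball /=; apply: inB => //.
  by move: ht => /andP[_ h]; apply: le_trans c1; exact: ltW.
have acc : forall s, s < c -> exists t, [/\ 0 <= t < c, s < t & t < c].
  move=> s sc; pose s' := if s <= 0 then 0 else s.
  have s'c : s' < c by rewrite /s'; case: ifPn.
  have s'0 : 0 <= s' by rewrite /s'; case: ifPn => // h; lra.
  have ss' : s <= s' by rewrite /s'; case: ifPn => // h; lra.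
  exists ((s' + c) / 2); split; [apply/andP; split|..]; lra.
have inK : forall t, 0 <= t < c -> d_closure d (mball d x0 eps0) (al t).
  by move=> t /lift [].
have [p [Kp clp]] := mcluster Hd cK acc inK.
have c02 : 0 < c < 2 by rewrite c0 (le_lt_trans c1) //; lra.
have conv := lift_conv Hd Hd' Hfc Hfd cK KD c02 bc alc lift Kp clp.
have Dp := KD p Kp.
have lift' : forall t, 0 <= t < c -> D (al t) /\ f (al t) = clampe be t.
  by move=> t /lift [].
have c02' : 0 <= c < 2 by rewrite (ltW c0) (le_lt_trans c1) //; lra.
have fp : f p = clampe be c.
  exact: (lift_val Hd' Hfc (S := fun t => 0 <= t < c) c02' bc (fun t h => h) lift' Dp clp).
have c2' : c < 2 by lra.
have bc2 : cont_on d' (clampe be) [set t | c <= t < 2].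
  apply: cont_on_sub bc => t /= /andP[h1 h2]; apply/andP; split => //; lra.
have [c3 [al2 [/andP[cc3 c32] [al20 al2c al2D al2f] _]]] := HA c2' bc2 Dp fp.
apply: nomax; exists c3, (fun t => if t < c then al t else al2 t); split.
- by rewrite cc3 c32.
- split.
  + by rewrite c0.
  + exact: (concat_cont c0 cc3 alc al2c al20 conv).
  + move=> t /andP[t0 tc3]; case: ifPn => tc; first by apply: alD; rewrite t0 tc.
    by apply: al2D; rewrite tc3 leNgt tc.
  + move=> t /andP[t0 tc3]; case: ifPn => tc; first by apply: alf; rewrite t0 tc.
    by apply: al2f; rewrite tc3 leNgt tc.
- by move=> t /andP[_ ->].
Qed.


Lemma lift_sub (x0 : T) (eps0 e : R) (be : R -> T') (x : T) :
  d_compact d (d_closure d (mball d x0 eps0)) ->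
  d_closure d (mball d x0 eps0) `<=` D ->
  0 < e -> e < eps0 ->
  is_curve d' be -> D x -> d x x0 <= e -> f x = be 0 ->
  ~ (f @` mball d x0 eps0) (be 1) ->
  exists a b (g : R -> T), [/\ 0 <= a, a < b, b <= 1,
     curve_family d (msphere d x0 e) (msphere d x0 eps0) (mannulus d x0 e eps0) g
       /\ (forall t, 0 <= t <= 1 -> D (g t)) &
     forall s, 0 <= s <= 1 -> f (g s) = be (a + s * (b - a))].
Proof.
move=> cK KD e0 ee cb Dx dx fx nb.
have bc := clamp_cont cb.
have fx' : f x = clampe be 0 by rewrite /clampe ler01.
have lt02 : (0 : R) < 2 by lra.
have [c [al maxl]] := HA lt02 bc Dx fx'.
have [ts [ts0 tsc ts1 dts]] := lift_escape cK KD cb nb maxl.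
case: maxl => /andP[c0 c2] [al0 alc alD alf] _.
pose phi t := d (al t) x0.
have rc : rcont phi 0 ts := rcont_of Hd x0 (lexx 0) tsc alc.
have p0 : phi 0 < eps0 by rewrite /phi al0; lra.
have [T1 [/andP[T10 T1ts] pT1 bT1]] := first_hit ts0 rc p0 dts.
have rc1 : rcont phi 0 T1 by apply: (rcont_sub (lexx 0) T1ts rc).
have p0' : phi 0 <= e by rewrite /phi al0.
have pT1' : e < phi T1 by rewrite pT1.
have [T0 [/andP[T00 T01] pT0 aT0]] := last_hit (ltW T10) rc1 p0' pT1'.
have q0 : 0 < T1 - T0 by rewrite subr_gt0.
have T1c : T1 < c by apply: le_lt_trans T1ts tsc.
have T11 : T1 <= 1 by apply: le_trans T1ts ts1.
have uin s : 0 <= s <= 1 -> T0 <= T0 + s * (T1 - T0) <= T1.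
  move=> /andP[s0 s1]; have h1 : 0 <= s * (T1 - T0) by rewrite mulr_ge0 // ltW.
  have h2 : s * (T1 - T0) <= T1 - T0.
    by rewrite -[X in _ <= X]mul1r; apply: ler_wpM2r => //; exact: ltW.
  apply/andP; split; lra.
have uc s : 0 <= s <= 1 -> 0 <= T0 + s * (T1 - T0) < c.
  by move=> /uin /andP[h1 h2]; apply/andP; split; lra.
exists T0, T1, (fun s => al (T0 + s * (T1 - T0))); split => //.
- split; last by move=> t /uc /alD.
  split.
  + move=> s /= hs e' e'0; have [del del0 H] := alc _ (uc s hs) e' e'0.
    exists (del / (T1 - T0)); first by rewrite divr_gt0.
    move=> s' /= hs' sd; apply: H; first exact: uc.
    rewrite (_ : _ - _ = (s' - s) * (T1 - T0)); last by ring.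
    by rewrite normrM (gtr0_norm q0) -ltr_pdivlMr.
  + by rewrite /msphere /= mul0r addr0.
  + by rewrite /msphere /= mul1r addrC subrK.
  + move=> t /andP[t0 t1]; rewrite /mannulus /=.
    have h1 : 0 < t * (T1 - T0) by rewrite mulr_gt0.
    have h2 : t * (T1 - T0) < T1 - T0.
      by rewrite -[X in _ < X]mul1r ltr_pM2r.
    apply/andP; split.
      by apply: aT0; apply/andP; split; lra.
    by apply: bT1; apply/andP; split; lra.
- move=> s hs; rewrite alf; last exact: uc.
  have /andP[_ h] := uin s hs.
  by rewrite /clampe (le_trans h T11).
Qed.

End Lift2.

Lemma powR_invx {R : realType} (x r : R) : 0 < x -> x^-1 `^ r = (x `^ r)^-1.
Proof.
move=> x0.
have h : x^-1 `^ r * x `^ r = 1.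
  by rewrite -powRM ?invr_ge0 ?ltW // mulVf ?gt_eqF // powR1.
have hn : x `^ r != 0 by rewrite gt_eqF // powR_gt0.
by rewrite -[LHS]mulr1 -(mulfV hn) mulrA h mul1r.
Qed.

Lemma adm_minor {R : realType} {dsp dsp' : measure_display}
  (X : measurableType dsp) (X' : measurableType dsp')
  (d : X -> X -> R) (d' : X' -> X' -> R) (Hd : is_metric d) (Hd' : is_metric d')
  (D : set X) (f : X -> X') (Hfc : cont_map_on d d' D f)
  (Hfo : open_map_on d d' D f) (Hfd : discrete_map_on d D f)
  (HA : condition_A d d' D f) (x0 : X) (eps0 e : R)
  (cK : d_compact d (d_closure d (mball d x0 eps0)))
  (KD : d_closure d (mball d x0 eps0) `<=` D) (e0 : 0 < e) (eeps : e < eps0)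
  (rho : X' -> \bar R) :
  admissible d' (image_family f
    [set g | curve_family d (msphere d x0 e) (msphere d x0 eps0)
               (mannulus d x0 e eps0) g /\ forall t : R, (0 <= t <= 1)%R -> D (g t)]) rho ->
  admissible d' (curve_family d' (f @` d_closure d (mball d x0 e))
                   (d_boundary d' (f @` mball d x0 eps0)) setT) rho.
Proof.
move=> [r0 rm rH]; split => // be [cb [x hx fx] hb1 _] rb h nh.
have Dx : D x by apply: KD; apply: (closure_ball_mono (ltW eeps)).
have dx : d x x0 <= e := closure_ball_le Hd hx.
have BD : mball d x0 eps0 `<=` D by move=> y /(ball_sub_closure Hd) /KD.
have nb : ~ (f @` mball d x0 eps0) (be 1).
  move=> hb; case: hb1 => _; apply.
  exact: (Hfo _ BD (mball_open Hd (p:=x0) (r:=eps0)) _ hb).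
have [a [b [g [a0 ab b1 [Gg Dg] fg]]]] :=
  lift_sub Hd Hd' Hfc Hfd HA cK KD e0 eeps cb Dx dx fx nb.
pose ga := f \o g.
have hg : forall u, 0 <= u <= 1 -> ga u = be (a + u * (b - a)).
  by move=> u hu; rewrite /ga /= fg.
have [rg eqs A0 Aleq] := subcurve_len d' Hd' be ga a b a0 ab b1 rb hg.
set A := fine (curve_length d' be 0 a) in eqs A0 Aleq.
have nh' : normal_rep d' ga (fun s => h (s + A)).
  move=> t ht; rewrite /= addrC eqs // nh ?hg //.
  move: ht => /andP[t0 t1].
  have h1 : 0 <= t * (b - a) by rewrite mulr_ge0 // subr_ge0 ltW.
  have h2 : t * (b - a) <= b - a.
    by rewrite -[X in _ <= X]mul1r; apply: ler_wpM2r => //; rewrite subr_ge0 ltW.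
  apply/andP; split; lra.
have Gga : image_family f [set g | curve_family d (msphere d x0 e) (msphere d x0 eps0)
               (mannulus d x0 e eps0) g /\ forall t : R, (0 <= t <= 1)%R -> D (g t)] ga.
  by exists g.
apply: le_trans (rH ga Gga rg _ nh') _.
exact: (@shift_le_integral _ (fun s => rho (h s)) A _ _ (fun x => r0 (h x)) A0 Aleq).
Qed.

Unset Implicit Arguments.
Set Strict Implicit.

Theorem lemma3 (R : realType) (dsp dsp' : measure_display)
  (X : measurableType dsp) (X' : measurableType dsp')
  (d : X -> X -> R) (d' : X' -> X' -> R)
  (mu : {measure set X -> \bar R}) (mu' : {measure set X' -> \bar R})
  (alpha alpha' : R)
  (Hd : is_metric d) (Hd' : is_metric d')
  (HBX : borel_for d) (HBX' : borel_for d')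
  (Hmu : locally_finite d mu) (Hmu' : locally_finite d' mu')
  (Hdim : hdim d = alpha%:E) (Halpha : 2 <= alpha)
  (Hdim' : hdim d' = alpha'%:E) (Halpha' : 2 <= alpha')
  (D : set X) (HD : d_domain d D)
  (Q : X -> \bar R) (HQm : measurable_fun D Q)
  (HQ0 : forall x, D x -> (0 <= Q x)%E)
  (f : X -> X') (Hfc : cont_map_on d d' D f)
  (Hfo : open_map_on d d' D f) (Hfd : discrete_map_on d D f)
  (x0 : X) (Hx0 : D x0)
  (Hring : ring_Q_map d d' mu mu' alpha alpha' D f Q x0)
  (eps0 : R) (Heps0 : 0 < eps0)
  (Hdist : (eps0%:E < dist_to d x0 (d_boundary d D))%E)
  (Hcomp : d_compact d (d_closure d (mball d x0 eps0)))
  (HcompD : d_closure d (mball d x0 eps0) `<=` D)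
  (eps0' : R) (Heps0' : 0 < eps0' < eps0)
  (F : R -> R -> \bar R) (psi : R -> lebR R -> \bar R)
  (Hpsim : forall e, 0 < e < eps0' ->
     measurable_fun [set t : lebR R | (e < t < eps0)%R] (psi e))
  (Hpsi0 : forall e, 0 < e < eps0' ->
     forall t : lebR R, (e < t < eps0)%R -> (0 <= psi e t)%E)
  (HF : forall e, 0 < e < eps0' ->
     (\int[mu]_(x in mannulus d x0 e eps0)
        (Q x * (psi e (d x x0) `^ alpha)) <= F e eps0)%E)
  (HI : forall e, 0 < e < eps0' ->
     (0 < \int[completed_lebesgue_measure]_(t in [set t : lebR R | (e < t < eps0)%R])
            psi e t < +oo)%E)
  (HA : condition_A d d' D f) :
  forall e, 0 < e < eps0' ->
    (modulus d' mu' alpha'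
       (curve_family d' (f @` d_closure d (mball d x0 e))
                        (d_boundary d' (f @` mball d x0 eps0)) setT)
     <= F e eps0 *
        ((fine (\int[completed_lebesgue_measure]_(t in [set t : lebR R | (e < t < eps0)%R])
                 psi e t) `^ alpha)^-1)%:E)%E.
Proof.
move=> e /andP[e0 ee'].
have he : 0 < e < eps0' by rewrite e0 ee'.
have eeps : e < eps0 by case/andP: Heps0' => _ h; exact: lt_trans ee' h.
set Gr := [set g | curve_family d (msphere d x0 e) (msphere d x0 eps0)
               (mannulus d x0 e eps0) g /\ forall t : R, (0 <= t <= 1)%R -> D (g t)].
apply: (@le_trans _ _ (modulus d' mu' alpha' (image_family f Gr))).
  rewrite /modulus; apply: ereal_inf_le_tmp => _ [rho arho <-]; exists rho => //.
  exact: (adm_minor Hd Hd' Hfc Hfo Hfd HA Hcomp HcompD e0 eeps).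
set I := (\int[completed_lebesgue_measure]_(t in [set t : lebR R | (e < t < eps0)%R]) psi e t)%E.
have /andP[I0 Ioo] := HI e he.
have Ifin : I \is a fin_num by rewrite ge0_fin_numE // ltW.
set Iv := fine I.
have Iv0 : 0 < Iv by rewrite fine_gt0 // I0 Ioo.
have IE : I = Iv%:E by rewrite /Iv fineK.
set k := Iv^-1.
have k0 : 0 < k by rewrite invr_gt0.
pose eta := fun t : lebR R => (k%:E * psi e t)%E.
have meta : measurable_fun [set r : lebR R | (e < r < eps0)%R] eta.
  exact: measurable_funeM (Hpsim e he).
have eta0 : forall r, e < r < eps0 -> (0 <= eta r)%E.
  by move=> r hr; apply: mule_ge0; [rewrite lee_fin ltW | exact: Hpsi0].
have eta1 : (1 <= \int[completed_lebesgue_measure]_(r in [set r : lebR R | (e < r < eps0)%R]) eta r)%E.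
  rewrite /eta ge0_integralZl_gen //; last by move=> t ht; exact: Hpsi0.
  by rewrite -/I IE -EFinM mulVf ?gt_eqF.
apply: le_trans (Hring e eps0 e0 eeps eta meta eta0 eta1) _.
have annD : mannulus d x0 e eps0 `&` D = mannulus d x0 e eps0.
  apply/seteqP; split => [x []//|x hx]; split => //; apply: HcompD.
  apply: (ball_sub_closure Hd); rewrite /mball /=; move: hx; rewrite /mannulus /=.
  by case/andP.
rewrite annD.
have kp : 0 < k `^ alpha by rewrite powR_gt0.
rewrite (@eq_integral _ _ _ _ _ (fun x => (k `^ alpha)%:E * (Q x * psi e (d x x0) `^ alpha))%E); last first.
  move=> x /set_mem hx.
  have p0 : (0 <= psi e (d x x0))%E by exact: (Hpsi0 e he (d x x0) hx).
  have k0' : (0 <= k%:E)%E by rewrite lee_fin ltW.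
  rewrite /eta (poweRM alpha k0' p0).
  by rewrite poweR_EFin muleCA.
rewrite ge0_integralZl_gen //; last first.
  move=> x hx; apply: mule_ge0; last exact: poweR_ge0.
  apply: HQ0; apply: HcompD; apply: (ball_sub_closure Hd); rewrite /mball /=.
  by move: hx; rewrite /mannulus /=; case/andP.
rewrite muleC; apply: le_trans (lee_wpmul2r _ (HF e he)) _.
  by rewrite lee_fin ltW.
by rewrite /k powR_invx.
Qed.
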